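(* In the setting of the context, assume (G1) and (G2). 1. If (G3) holds, then ($\overline{G}_3$) holds. 2. If $X_0\neq X$ and ($\overline{G}_3$) holds, then (G3) holds. Here (G3): there exists $c_2\ge1$ such that $\operatorname{cap}U(x,r)\ge c_2^{-1}g(r)^{-1}$ for all $x\in X_0$ and $0<r<R_0(x)$; and ($\overline G_3$): there exists $c_2\ge1$ such that for all $x\in X_0$, $0<r<R_0(x)$ and $y\in X\setminus U(x,r)$, $\|\varepsilon_y^{\overline{U(x,r)}}\|\ge c_2^{-1}g(r)^{-1}G(y,x)$.
   Context: $(X,\rho)$ is a separable metric space, $X_0\subseteq X$ open; $\mathcal M(X)$ is the set of finite Borel measures (extended to universally measurable sets), $\|\mu\|:=\mu(X)$, $\varepsilon_x$ the Dirac measure. For every open $U\subseteq X$ and $x\in X$ a measure $\mu_x^U\in\mathcal M(X)$ is given such that for all open $U,V$ and all $x$: $\mu_x^U(U)=0$, $\|\mu_x^U\|\le1$, $\mu_x^U=\varepsilon_x$ if $x\notin U$; $y\mapsto\mu_y^U(E)$ is universally measurable for Borel $E$; and $\mu_x^U=\int\mu_y^U\,d\mu_x^V(y)$ if $V\subseteq U$. For closed $A$, $\varepsilon_x^A:=\mu_x^{X\setminus A}$. $\mathcal U(X_0)$ is the set of open $U$ with $\overline U\subseteq X_0$; $U(x,r)$ the open ball; $R_0(x):=\sup\{r>0:\overline{U(x,r)}\subseteq X_0\}$ for $x\in X_0$. $G\colon X\times X\to(0,\infty]$ is Borel, $G\mu(x):=\int G(x,y)\,d\mu(y)$, and $\operatorname{cap}A:=\sup\{\|\mu\|:\mu\in\mathcal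 M(X),\ \mu(X\setminus A)=0,\ G\mu\le1\}$. (G1): there exists $c_1\ge1$ such that for all $U\in\mathcal U(X_0)$, $x\in U$, $\delta>0$ and every closed $A\subseteq U$ there are a closed neighborhood $B\subseteq U$ of $A$ and a measure $\nu$ carried by $B$ with $\|\varepsilon_x^B\|-\delta<c_1\|\varepsilon_x^A\|$ and $\|\varepsilon_y^A\|\le G\nu(y)\le c_1\|\varepsilon_y^B\|$ for all $y\in X$. (G2): there are a strictly decreasing continuous $g\colon[0,\infty)\to(0,\infty]$ and constants $c,c_D,M_0\in[1,\infty)$, $\alpha_0\in(0,1)$ such that for all $r>0$, $g(r/2)\le c_Dg(r)$, $M_0g(r)\le g(\alpha_0r)$, and $c^{-1}g\circ\rho\le G\le c\,g\circ\rho$ on $X\times X$. *)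

(* Defs.v *)
From HB Require Import structures.
From mathcomp Require Import all_boot all_order all_algebra.
From mathcomp Require Import all_classical all_reals all_analysis.
From mathcomp Require Import measurable_realfun.
Set Implicit Arguments. Unset Strict Implicit. Unset Printing Implicit Defensive.
Import Order.TTheory GRing.Theory Num.Theory.
Import numFieldNormedType.Exports.
Local Open Scope classical_set_scope.
Local Open Scope ring_scope.

Section Metric.
Context {R : realType} {X : Type} (rho : X -> X -> R).

Definition is_metric : Prop :=
  [/\ (forall x y, 0 <= rho x y),
      (forall x y, rho x y = 0 <-> x = y),
      (forall x y, rho x y = rho y x) &
      (forall x y z, rho x z <= rho x y + rho y z)].

Definition rball (x : X) (r : R) : set X := [set y | rho x y < r].

Definition ropen (A : set X) : Prop :=
  forall x, A x -> exists2 r : R, 0 < r & rball x r `<=` A.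

Definition rclosed (A : set X) : Prop := ropen (~` A).

Definition rclosure (A : set X) : set X :=
  [set x | forall r : R, 0 < r -> exists y, A y /\ rho x y < r].

Definition rnbhd (A B : set X) : Prop :=
  forall x, A x -> exists2 r : R, 0 < r & rball x r `<=` B.

Definition rseparable : Prop :=
  exists D : set X, countable D /\ rclosure D = setT.

Definition Uclass (X0 : set X) (U : set X) : Prop :=
  ropen U /\ rclosure U `<=` X0.

Definition R0 (X0 : set X) (x : X) : \bar R :=
  ereal_sup [set r%:E | r in [set r : R | 0 < r /\ rclosure (rball x r) `<=` X0]].

End Metric.

Section Meas.
Local Open Scope ereal_scope.
Context {R : realType} {d : measure_display} {X : measurableType d}.

(* universally measurable sets: measurable for the completion of every
   finite Borel measure (Caratheodory sigma-algebra of its outer measure) *)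
Definition univ_measurable (A : set X) : Prop :=
  forall m : {finite_measure set X -> \bar R}, (m^*)%mu.-cara.-measurable A.

Definition univ_measurable_fun (f : X -> \bar R) : Prop :=
  forall (m : {finite_measure set X -> \bar R}) (B : set (\bar R)),
    measurable B -> (m^*)%mu.-cara.-measurable (f @^-1` B).

(* integral w.r.t. (the completion of) a finite measure; used for
   universally measurable integrands *)
Definition uintegral (m : {finite_measure set X -> \bar R}) (f : X -> \bar R)
  : \bar R :=
  \int[@completed_measure_extension _ _ R m]_y f y.

Definition mass (m : {finite_measure set X -> \bar R}) : \bar R := m setT.

Definition harmonic_kernel (rho : X -> X -> R)
    (mu : set X -> X -> {finite_measure set X -> \bar R}) : Prop :=
  forall U V : set X, ropen rho U -> ropen rho V -> forall x : X,
  [/\ mu U x U = 0,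
      mass (mu U x) <= 1,
      (~ U x -> forall E, measurable E -> mu U x E = \d_x E),
      (forall E, measurable E -> univ_measurable_fun (fun y => mu U y E)) &
      (V `<=` U -> forall E, measurable E ->
         mu U x E = uintegral (mu V x) (fun y => mu U y E))].

Definition epsA (mu : set X -> X -> {finite_measure set X -> \bar R})
  (A : set X) (x : X) : {finite_measure set X -> \bar R} := mu (~` A) x.

Definition Gpot (G : X -> X -> \bar R) (m : {finite_measure set X -> \bar R})
  (x : X) : \bar R := \int[m]_y G x y.

Definition capacity (G : X -> X -> \bar R) (A : set X) : \bar R :=
  ereal_sup [set mass m | m in
    [set m : {finite_measure set X -> \bar R} |
       m (~` A) = 0 /\ forall x, Gpot G m x <= 1]].

Definition G1 (rho : X -> X -> R) (X0 : set X)
    (mu : set X -> X -> {finite_measure set X -> \bar R})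
    (G : X -> X -> \bar R) : Prop :=
  exists c1 : R, (1 <= c1)%R /\
  forall (U : set X) (x : X) (delta : R) (A : set X),
    Uclass rho X0 U -> U x -> (0 < delta)%R -> rclosed rho A -> A `<=` U ->
    exists (B : set X) (nu : {finite_measure set X -> \bar R}),
      [/\ rclosed rho B, B `<=` U, rnbhd rho A B & nu (~` B) = 0] /\
      mass (epsA mu B x) - delta%:E < c1%:E * mass (epsA mu A x) /\
          (forall y, mass (epsA mu A y) <= Gpot G nu y /\
                    Gpot G nu y <= c1%:E * mass (epsA mu B y)).

(* (G2), with the function g and the constants given explicitly *)
Definition G2 (rho : X -> X -> R) (G : X -> X -> \bar R) (g : R -> \bar R)
    (c cD M0 alpha0 : R) : Prop :=
  [/\ (forall r s : R, (0 <= r)%R -> (r < s)%R -> g s < g r),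
      {within `[0%R, +oo[%classic, continuous g} &
      (forall r : R, (0 <= r)%R -> 0 < g r)] /\
  [/\ (1 <= c)%R, (1 <= cD)%R, (1 <= M0)%R & (0 < alpha0 < 1)%R] /\
  [/\ (forall r : R, (0 < r)%R -> g (r / 2)%R <= cD%:E * g r),
      (forall r : R, (0 < r)%R -> M0%:E * g r <= g (alpha0 * r)%R) &
      (forall x y : X, (c^-1)%:E * g (rho x y) <= G x y /\
                       G x y <= c%:E * g (rho x y))].

Definition G3 (rho : X -> X -> R) (X0 : set X) (G : X -> X -> \bar R)
    (g : R -> \bar R) : Prop :=
  exists c2 : R, (1 <= c2)%R /\
  forall (x : X) (r : R), X0 x -> (0 < r)%R -> r%:E < R0 rho X0 x ->
    (c2^-1 * (fine (g r))^-1)%:E <= capacity G (rball rho x r).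

Definition G3bar (rho : X -> X -> R) (X0 : set X)
    (mu : set X -> X -> {finite_measure set X -> \bar R})
    (G : X -> X -> \bar R) (g : R -> \bar R) : Prop :=
  exists c2 : R, (1 <= c2)%R /\
  forall (x : X) (r : R) (y : X), X0 x -> (0 < r)%R -> r%:E < R0 rho X0 x ->
    ~ rball rho x r y ->
    (c2^-1 * (fine (g r))^-1)%:E * G y x
      <= mass (epsA mu (rclosure rho (rball rho x r)) y).

End Meas.

(* Main.v *)
Require Import Defs.
From HB Require Import structures.
From mathcomp Require Import all_boot all_order all_algebra.
From mathcomp Require Import all_classical all_reals all_analysis.
From mathcomp Require Import measurable_realfun.
From mathcomp Require Import ring lra.
Import Order.TTheory GRing.Theory Num.Theory.
Import numFieldNormedType.Exports.
Set Implicit Arguments. Unset Strict Implicit. Unset Printing Implicit Defensive.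
Local Open Scope classical_set_scope.
Local Open Scope ring_scope.
Section MetricLemmas.
Context {R : realType} {X : Type} (rho : X -> X -> R) (hm : is_metric rho).

Lemma rho_ge0 x y : 0 <= rho x y. Proof. by case: hm. Qed.
Lemma rho_sym x y : rho x y = rho y x. Proof. by case: hm. Qed.
Lemma rho_tri x y z : rho x z <= rho x y + rho y z. Proof. by case: hm. Qed.
Lemma rho_xx x : rho x x = 0. Proof. by case: hm => _ h _ _; apply/h. Qed.

Lemma rball_open x r : ropen rho (rball rho x r).
Proof.
move=> y; rewrite /rball /= => hy; exists (r - rho x y); first by rewrite subr_gt0.
move=> z; rewrite /rball /= => hz.
have := rho_tri x y z; lra.
Qed.

Lemma rclosure_closed A : rclosed rho (rclosure rho A).
Proof.
move=> x /= hx.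
have [r r0 hr] : exists2 r : R, 0 < r & forall y, A y -> r <= rho x y.
  apply: contrapT => hn; apply: hx => r r0.
  apply: contrapT => hne; apply: hn; exists r => // y Ay.
  by rewrite leNgt; apply/negP => hlt; apply: hne; exists y.
exists (r / 2); first by rewrite divr_gt0.
move=> z; rewrite /rball /= => hz hcl.
have r2 : 0 < r / 2 by rewrite divr_gt0.
have [y [Ay hy]] := hcl (r / 2) r2.
have := hr y Ay; have := rho_tri x z y; lra.
Qed.

Lemma sub_rclosure A : A `<=` rclosure rho A.
Proof. by move=> x Ax r r0; exists x; rewrite rho_xx. Qed.

Lemma rclosure_ball x s z : rclosure rho (rball rho x s) z -> rho x z <= s.
Proof.
move=> h; rewrite leNgt; apply/negP => hlt.
have hp : 0 < rho x z - s by rewrite subr_gt0.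
have [y [hy hzy]] := h (rho x z - s) hp.
move: hy; rewrite /rball /= => hy.
have := rho_tri x y z; rewrite (rho_sym y z); lra.
Qed.

Lemma le_rclosure A B : A `<=` B -> rclosure rho A `<=` rclosure rho B.
Proof. by move=> AB x h r r0; have [y [Ay ?]] := h r r0; exists y; split => //; apply: AB. Qed.

Lemma rclosed_rclosure_sub A B : rclosed rho B -> A `<=` B -> rclosure rho A `<=` B.
Proof.
move=> cB AB x hx; apply: contrapT => nBx.
have [r r0 hr] := cB x nBx.
have [y [Ay hy]] := hx r r0.
by apply: (hr y) => //; apply: AB.
Qed.

End MetricLemmas.
Section MeasLemmas.
Local Open Scope ereal_scope.
Context {R : realType} {d : measure_display} {X : measurableType d}.

Lemma carried_split (nu : {finite_measure set X -> \bar R}) (B : set X)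
  (f : X -> \bar R) : measurable B -> nu (~` B) = 0 ->
  measurable_fun setT f -> (forall z, 0 <= f z) ->
  \int[nu]_z f z = \int[nu]_(z in B) f z.
Proof.
move=> mB nB mf f0.
have mC : measurable (~` B) by exact: measurableC.
rewrite (_ : [set: X] = B `|` ~` B); last by rewrite setUv.
rewrite ge0_integral_setU //; last first.
  exact/disj_setPCl.
  by rewrite setUv.
rewrite (null_set_integral (N := ~` B)) ?adde0 //.
exact: (measurable_funS measurableT (@subsetT _ _) mf).
Qed.

Lemma mass_carried (nu : {finite_measure set X -> \bar R}) (B : set X) :
  measurable B -> nu (~` B) = 0 -> nu B = mass nu.
Proof.
move=> mB nB; rewrite /mass.
have -> : [set: X] = B `|` ~` B by rewrite setUv.
rewrite measureU //; last 2 first.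
- exact: measurableC.
- by rewrite setICr.
by rewrite [X in _ + X](_ : _ = 0) ?adde0 //; exact: nB.
Qed.

Lemma int_carried_ub (nu : {finite_measure set X -> \bar R}) (B : set X)
  (f : X -> \bar R) (a : R) : measurable B -> nu (~` B) = 0 ->
  measurable_fun setT f -> (forall z, 0 <= f z) -> (0 <= a)%R ->
  (forall z, B z -> f z <= a%:E) -> \int[nu]_z f z <= a%:E * mass nu.
Proof.
move=> mB nB mf f0 a0 fa; rewrite (@carried_split nu B f mB nB mf f0).
rewrite -(@mass_carried nu B mB nB) -integral_cst //.
apply: ge0_le_integral => //; try exact: (measurable_funS measurableT (@subsetT _ B) mf).
Qed.

Lemma int_carried_lb (nu : {finite_measure set X -> \bar R}) (B : set X)
  (f : X -> \bar R) (a : R) : measurable B -> nu (~` B) = 0 ->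
  measurable_fun setT f -> (forall z, 0 <= f z) -> (0 <= a)%R ->
  (forall z, B z -> a%:E <= f z) -> a%:E * mass nu <= \int[nu]_z f z.
Proof.
move=> mB nB mf f0 a0 fa; rewrite (@carried_split nu B f mB nB mf f0).
rewrite -(@mass_carried nu B mB nB) -integral_cst //.
apply: ge0_le_integral => //; try exact: (measurable_funS measurableT (@subsetT _ B) mf).
Qed.

Lemma massE (m : {finite_measure set X -> \bar R}) : mass m = (fine (mass m))%:E.
Proof. by rewrite fineK //; exact: fin_num_measure. Qed.

End MeasLemmas.
Section KernLemmas.
Local Open Scope ereal_scope.
Context {R : realType} {d : measure_display} {X : measurableType d}.
Context {rho : X -> X -> R} {mu : set X -> X -> {finite_measure set X -> \bar R}}.
Hypothesis hk : harmonic_kernel rho mu.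

Lemma mass_le1 U x : ropen rho U -> mass (mu U x) <= 1.
Proof. by move=> oU; case: (hk oU oU x). Qed.

Lemma mass_ge0 (m : {finite_measure set X -> \bar R}) : 0 <= mass m.
Proof. exact: measure_ge0. Qed.

Lemma mass_out U x : ropen rho U -> ~ U x -> mass (mu U x) = 1.
Proof.
move=> oU nUx; case: (hk oU oU x) => _ _ h _ _.
by rewrite /mass h // diracE in_setT.
Qed.

Lemma mass_mono U V y : ropen rho U -> ropen rho V -> V `<=` U ->
  mass (mu U y) <= mass (mu V y).
Proof.
move=> oU oV VU; case: (hk oU oV y) => _ _ _ hm hc.
rewrite /mass (hc VU setT measurableT) /uintegral.
set m := (X in integral X _ _).
apply: (le_trans (@ge0_le_integral _ _ _ m setT measurableT (fun z => mu U z setT) (cst 1) _ _ _ _)).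
- by move=> z _; exact: measure_ge0.
- move=> _ B mB; rewrite setTI.
  exact: (hm setT measurableT (mu V y) B mB).
- exact: measurable_cst.
- by move=> z _; have := @mass_le1 U z oU; rewrite /mass.
rewrite integral_cst // mul1e /m /=.
rewrite /completed_measure_extension measurable_mu_extE //; exact: measurableT.
Qed.

End KernLemmas.
Section GLemmas.
Local Open Scope ereal_scope.
Context {R : realType} {d : measure_display} {X : measurableType d}.
Context {rho : X -> X -> R} {G : X -> X -> \bar R}.
Hypothesis hsig : @measurable d X = <<s ropen rho >>.
Hypothesis mG : measurable_fun setT (fun p : X * X => G p.1 p.2).
Hypothesis G0 : forall x y, (0 < G x y)%E.

Lemma mopen A : ropen rho A -> measurable A.
Proof. by move=> oA; rewrite hsig; exact: sub_sigma_algebra. Qed.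

Lemma mclosed B : rclosed rho B -> measurable B.
Proof. by move=> cB; rewrite -(setCK B); apply: measurableC; exact: mopen. Qed.

Lemma Gge0 x y : 0 <= G x y. Proof. exact: ltW. Qed.

Lemma mGy y : measurable_fun setT (G y).
Proof. exact: (measurableT_comp mG (pair1_measurable y)). Qed.

Lemma mGx y : measurable_fun setT (G ^~ y).
Proof. exact: (measurableT_comp mG (pair2_measurable y)). Qed.

Lemma Gpot_ge0 (nu : {finite_measure set X -> \bar R}) z : 0 <= Gpot G nu z.
Proof. by apply: integral_ge0 => w _; exact: Gge0. Qed.

Lemma mGpot (nu : {finite_measure set X -> \bar R}) : measurable_fun setT (Gpot G nu).
Proof.
exact: (@measurable_fun_fubini_tonelli_F _ _ X X R nu (fun p : X * X => G p.1 p.2) mG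
  (fun p => Gge0 p.1 p.2)).
Qed.

Lemma Gpot_swap (m nu : {finite_measure set X -> \bar R}) :
  \int[m]_z Gpot G nu z = \int[nu]_w \int[m]_z G z w.
Proof.
exact: (@fubini_tonelli _ _ X X R m nu (fun p : X * X => G p.1 p.2) mG
  (fun p => Gge0 p.1 p.2)).
Qed.

Lemma mGswap (m : {finite_measure set X -> \bar R}) :
  measurable_fun setT (fun w => \int[m]_z G z w).
Proof.
exact: (@measurable_fun_fubini_tonelli_G _ _ X X R m (fun p : X * X => G p.1 p.2) mG
  (fun p => Gge0 p.1 p.2)).
Qed.

End GLemmas.
Section gLemmas.
Local Open Scope ereal_scope.
Context {R : realType}.
Context {g : R -> \bar R}.
Hypothesis gdec : forall r s : R, (0 <= r)%R -> (r < s)%R -> g s < g r.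
Hypothesis gpos : forall r : R, (0 <= r)%R -> 0 < g r.

Lemma gle r s : (0 <= r)%R -> (r <= s)%R -> g s <= g r.
Proof.
move=> r0; rewrite le_eqVlt => /orP[/eqP->//|rs].
exact/ltW/gdec.
Qed.

Lemma gfin r : (0 < r)%R -> g r \is a fin_num.
Proof.
move=> r0; rewrite fin_numE; apply/andP; split.
- by apply/negP => /eqP h; have := gpos (ltW r0); rewrite h.
- apply/negP => /eqP h; have := gdec (lexx 0%R) r0; rewrite h.
  by rewrite ltNge leey.
Qed.

Definition gr r := fine (g r).

Lemma grE r : (0 < r)%R -> g r = (gr r)%:E.
Proof. by move=> r0; rewrite /gr fineK //; exact: gfin. Qed.

Lemma gr_gt0 r : (0 < r)%R -> (0 < gr r)%R.
Proof. by move=> r0; rewrite -lte_fin -grE //; exact/gpos/ltW. Qed.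

Lemma grle r s : (0 < r)%R -> (r <= s)%R -> (gr s <= gr r)%R.
Proof.
move=> r0 rs; rewrite -lee_fin -!grE //; last exact: lt_le_trans rs.
exact/gle/rs/ltW.
Qed.

End gLemmas.
Arguments gr {R} g r.
Lemma R0_gt {R : realType} {X : Type} (rho : X -> X -> R) (X0 : set X) x (r : R) :
  (r%:E < R0 rho X0 x)%E ->
  exists s : R, (r < s)%R /\ rclosure rho (rball rho x s) `<=` X0.
Proof.
move=> /ereal_sup_gt [_ [s [s0 hs] <-]]; rewrite lte_fin => rs.
by exists s.
Qed.
Section Part1.
Local Open Scope ereal_scope.
Context {R : realType} {d : measure_display} {X : measurableType d}.

Lemma part1 (rho : X -> X -> R) (X0 : set X)
  (mu : set X -> X -> {finite_measure set X -> \bar R})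
  (G : X -> X -> \bar R) (g : R -> \bar R) (c cD M0 alpha0 : R) :
  is_metric rho ->
  (@measurable d X = <<s ropen rho >>) ->
  harmonic_kernel rho mu ->
  measurable_fun setT (fun p : X * X => G p.1 p.2) ->
  (forall x y, (0 < G x y)%E) ->
  G1 rho X0 mu G ->
  G2 rho G g c cD M0 alpha0 ->
  G3 rho X0 G g -> G3bar rho X0 mu G g.
Proof.
move=> hm hsig hk mG G0 [c1 [c1ge hG1]]
  [[gdec gcont gpos] [[cge cDge M0ge al]] [gdoub gM Gb]] [c2 [c2ge hc2]].
have c0 : (0 < c)%R by lra.
have cD0 : (0 < cD)%R by lra.
have c10 : (0 < c1)%R by lra.
have c20 : (0 < c2)%R by lra.
exists (2 * c1 * (c * c * c * c) * c2 * (cD * cD))%R; split.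
  by do ! apply: mulr_ege1 => //; lra.
move=> x r y X0x r0 rR0 nyr.
have [s [rs hs]] := R0_gt rR0.
set u := rho x y.
have ur : (r <= u)%R by rewrite leNgt; apply/negP => h; apply: nyr.
have u0 : (0 < u)%R by lra.
have u20 : (0 < 2 * u)%R by lra.
set U := rball rho x r.
set A := rclosure rho (rball rho x (r / 2)).
have UC : Uclass rho X0 U.
  split; first exact: rball_open.
  apply: subset_trans (le_rclosure _) hs.
  by move=> z; rewrite /U /rball /= => hz; lra.
have Ux : U x by rewrite /U /rball /= (rho_xx hm); lra.
have cA : rclosed rho A by exact: rclosure_closed.
have AU : A `<=` U.
  by move=> z /(rclosure_ball hm) hz; rewrite /U /rball /=; lra.
have [B [nu [[cB BU _ nuB] [_ hnu]]]] := hG1 U x 1%R A UC Ux ltr01 cA AU.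
have mB := mclosed hsig cB.
have r2 : (0 < r / 2)%R by lra.
have r2R : (r / 2)%:E < R0 rho X0 x.
  by apply: le_lt_trans rR0; rewrite lee_fin; lra.
have hk2 := hc2 x (r / 2)%R X0x r2 r2R.
have a0 := gr_gt0 gdec gpos r0.
have a20 := gr_gt0 gdec gpos r2.
have gu20 := gr_gt0 gdec gpos u20.
set K := (c2^-1 / gr g (r / 2))%R.
have K0 : (0 < K)%R by rewrite /K divr_gt0 // invr_gt0.
have : (K / 2)%R%:E < capacity G (rball rho x (r / 2)).
  apply: lt_le_trans hk2; rewrite lte_fin.
  have hK : K = (c2^-1 / fine (g (r / 2)))%R by [].
  lra.
case/ereal_sup_gt => _ [m [mB2 mG1] <-] hKm.
have mball : measurable (rball rho x (r / 2)).
  exact: (mopen hsig (@rball_open R X rho hm x (r / 2)%R)).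
have hc : 1%:E * mass m <= \int[m]_z Gpot G nu z.
  apply: (int_carried_lb mball mB2 (mGpot mG G0 nu) (Gpot_ge0 G0 nu)) => //.
  move=> z hz; apply: le_trans (hnu z).1.
  rewrite (mass_out hk cA) //.
  by move=> /(_ (sub_rclosure hm hz)).
have hc2' : \int[m]_z Gpot G nu z <= (c * c)%R%:E * mass nu.
  rewrite (Gpot_swap mG G0 m nu) /mass -integral_cst //.
  apply: ge0_le_integral => //.
  - by move=> w _; apply: integral_ge0 => z _; exact: Gge0.
  - exact: mGswap.
  move=> w _.
  apply: (@le_trans _ _ (\int[m]_z ((c * c)%R%:E * G w z))).
    apply: (@ge0_le_integral _ _ _ m setT measurableT (G ^~ w)
      (fun z => (c * c)%R%:E * G w z) (fun z _ => Gge0 G0 z w) (mGx mG w)).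
      by apply: emeasurable_funM; [exact: measurable_cst | exact: mGy].
    move=> z _.
    apply: le_trans (Gb z w).2 _.
    rewrite EFinM -muleA; apply: lee_wpmul2l; first by rewrite lee_fin; lra.
    apply: le_trans _ (lee_wpmul2l _ (Gb w z).1); last by rewrite lee_fin; lra.
    rewrite muleA -EFinM mulfV; last by apply/negP => /eqP; lra.
    by rewrite mul1e (rho_sym hm).
  rewrite ge0_integralZl_EFin //; try (by move=> z _; exact: Gge0);
    try exact: mGy; try (by apply: mulr_ge0; lra).
  rewrite /= -[X in _ <= X]mule1; apply: lee_wpmul2l; first by rewrite lee_fin mulr_ge0 // ltW.
  exact: mG1.
have hd : (c^-1 * gr g (2 * u))%R%:E * mass nu <= Gpot G nu y.
  apply: (int_carried_lb mB nuB (mGy mG y) (fun z => Gge0 G0 _ _)).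
    by apply: mulr_ge0; [rewrite invr_ge0; lra | exact: ltW].
  move=> z Bz; have := BU z Bz; rewrite /U /rball /= => hz.
  have hyz : (rho y z <= 2 * u)%R.
    have := rho_tri hm y x z; rewrite (rho_sym hm y x) -/u; lra.
  apply: le_trans _ (Gb y z).1.
  rewrite EFinM; apply: lee_wpmul2l; first by rewrite lee_fin invr_ge0; lra.
  rewrite -(grE gdec gpos u20).
  apply: gle => //; exact: rho_ge0.
have cAb : rclosed rho (rclosure rho (rball rho x r)) by exact: rclosure_closed.
have he : Gpot G nu y <= c1%:E * mass (epsA mu (rclosure rho (rball rho x r)) y).
  apply: le_trans (hnu y).2 _.
  apply: lee_wpmul2l; first by rewrite lee_fin; lra.
  apply: (mass_mono hk y cB cAb).
  move=> z nz Bz; apply: nz; apply: (sub_rclosure hm); exact: BU.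
have hf : G y x <= (c * cD * gr g (2 * u))%R%:E.
  apply: le_trans (Gb y x).2 _.
  rewrite (rho_sym hm) -/u !EFinM -muleA; apply: lee_wpmul2l.
    by rewrite lee_fin; lra.
  rewrite -(grE gdec gpos u20).
  have e : ((2 * u) / 2 = u)%R by field.
  rewrite -[X in g X <= _]e.
  exact: gdoub.
set mm := fine (mass m).
set n := fine (mass nu).
set Eb := mass (epsA mu (rclosure rho (rball rho x r)) y) in he *.
set e := fine Eb.
have mmE : mass m = mm%:E by exact: massE.
have nE : mass nu = n%:E by exact: massE.
have eE : Eb = e%:E by exact: massE.
set g2 := gr g (r / 2) in a20 K0 hKm *.
set gu2 := gr g (2 * u) in gu20 hd hf *.
set a := gr g r in a0 *.
have i1 : (K / 2 < mm)%R by rewrite -lte_fin -mmE.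
have i2 : (mm <= c * c * n)%R.
  by rewrite -lee_fin -mmE EFinM -nE; rewrite mul1e in hc; exact: le_trans hc hc2'.
have i3 : (c^-1 * gu2 * n <= c1 * e)%R.
  by rewrite -lee_fin [in X in _ <= X]EFinM -eE [in X in X <= _]EFinM -nE; exact: le_trans hd he.
have ha2 : (g2 <= cD * a)%R.
  rewrite -lee_fin EFinM -(grE gdec gpos r2) -(grE gdec gpos r0).
  exact: gdoub.
have n0 : (0 <= n)%R by rewrite /n fine_ge0 // mass_ge0.
have e0 : (0 <= e)%R by rewrite /e fine_ge0 // /Eb mass_ge0.
set P := (c2 * g2)%R.
have P0 : (0 < P)%R by rewrite /P mulr_gt0.
have j1 : (1 < 2 * P * mm)%R.
  have eK : (K * P = 1)%R.
    rewrite /K /P /g2; field; apply/andP; split; exact: lt0r_neq0.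
  rewrite -[X in (X < _)%R]eK -subr_gt0.
  have -> : (2 * P * mm - K * P = 2 * P * (mm - K / 2))%R by field.
  by apply: mulr_gt0; [exact: mulr_gt0 | rewrite subr_gt0].
set Q := (c * c)%R in i2 *.
have Q0 : (0 < Q)%R by rewrite /Q mulr_gt0.
have j2 : (1 < 2 * P * Q * n)%R.
  apply: lt_le_trans j1 _.
  rewrite -[X in (_ <= X)%R]mulrA; apply: ler_wpM2l => //.
  by apply: mulr_ge0 => //; exact: ltW.
have j3 : (gu2 * n <= c * c1 * e)%R.
  have := ler_wpM2l (ltW c0) i3.
  by rewrite !mulrA mulfV ?mul1r //; exact: lt0r_neq0.
have j4 : (gu2 <= 2 * P * Q * (c * c1 * e))%R.
  set Z := (2 * P * Q)%R in j2 *.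
  have Z0 : (0 <= Z)%R by rewrite /Z; apply: ltW; do ! (apply: mulr_gt0 => //); rewrite ltr0n.
  have h1 : (gu2 * 1 <= gu2 * (Z * n))%R by apply: ler_wpM2l; [exact: ltW | exact: ltW].
  rewrite mulr1 in h1; apply: le_trans h1 _.
  rewrite mulrCA; apply: ler_wpM2l => //.
have j5 : (P <= c2 * (cD * a))%R by rewrite /P; apply: ler_wpM2l => //; exact: ltW.
have j6 : (gu2 <= 2 * (c2 * (cD * a)) * Q * (c * c1 * e))%R.
  apply: le_trans j4 _.
  have W0 : (0 <= Q * (c * c1 * e))%R.
    apply: mulr_ge0; first exact: ltW.
    by apply: mulr_ge0 => //; apply: mulr_ge0; exact: ltW.
  have j5' : (0 <= c2 * (cD * a) - P)%R by rewrite subr_ge0.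
  have E1 : (2 * (c2 * (cD * a)) * Q * (c * c1 * e) - 2 * P * Q * (c * c1 * e) =
    2 * ((c2 * (cD * a) - P) * (Q * (c * c1 * e))))%R by ring.
  rewrite -subr_ge0 E1; apply: mulr_ge0 => //; exact: mulr_ge0.
set C := (2 * c1 * (c * c * c * c) * c2 * (cD * cD))%R.
have two0 : (0 < 2 :> R)%R by rewrite ltr0n.
have C0 : (0 < C)%R.
  rewrite /C; do ! (apply: mulr_gt0 => //).
apply: le_trans (lee_wpmul2l _ hf) _.
  rewrite lee_fin; apply: divr_ge0; last exact: ltW.
  by rewrite invr_ge0; exact: ltW.
rewrite -EFinM eE lee_fin.
rewrite -[fine (g r)]/a.
have -> : (C^-1 / a * (c * cD * gu2) = (c * cD * gu2) / (C * a))%R.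
  by field; apply/andP; split; exact: lt0r_neq0.
rewrite ler_pdivrMr; last exact: mulr_gt0.
have -> : (e * (C * a) = (c * cD) * (2 * (c2 * (cD * a)) * Q * (c * c1 * e)))%R.
  by rewrite /C /Q; ring.
apply: ler_wpM2l; first by apply: mulr_ge0; exact: ltW.
exact: j6.
Qed.
End Part1.
Section Part2.
Local Open Scope ereal_scope.
Context {R : realType} {d : measure_display} {X : measurableType d}.


Lemma part2 (rho : X -> X -> R) (X0 : set X)
  (mu : set X -> X -> {finite_measure set X -> \bar R})
  (G : X -> X -> \bar R) (g : R -> \bar R) (c cD M0 alpha0 : R) :
  is_metric rho ->
  (@measurable d X = <<s ropen rho >>) ->
  harmonic_kernel rho mu ->
  measurable_fun setT (fun p : X * X => G p.1 p.2) ->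
  (forall x y, (0 < G x y)%E) ->
  G1 rho X0 mu G ->
  G2 rho G g c cD M0 alpha0 ->
  X0 <> setT -> G3bar rho X0 mu G g -> G3 rho X0 G g.
Proof.
move=> hm hsig hk mG G0 [c1 [c1ge hG1]]
  [[gdec gcont gpos] [[cge cDge M0ge al]] [gdoub gM Gb]] nX0 [c2 [c2ge hc2]].
have [y0 ny0] : exists y0, ~ X0 y0.
  apply: contrapT => h; apply: nX0; apply/seteqP; split => // z _.
  by apply: contrapT => nz; apply: h; exists z.
have c0 : (0 < c)%R by lra.
have cD0 : (0 < cD)%R by lra.
have c10 : (0 < c1)%R by lra.
have c20 : (0 < c2)%R by lra.
exists (c1 * c2 * (c * c) * (cD * cD * cD))%R; split.
  by do ! apply: mulr_ege1.
move=> x r X0x r0 rR0.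
have [s [rs hs]] := R0_gt rR0.
set u := rho x y0.
have us : (s <= u)%R.
  rewrite leNgt; apply/negP => hsu; apply: ny0; apply: hs.
  exact: (sub_rclosure hm).
have u0 : (0 < u)%R by lra.
set U := rball rho x (r / 2).
set A := rclosure rho (rball rho x (r / 4)).
have UC : Uclass rho X0 U.
  split; first exact: rball_open.
  apply: subset_trans (le_rclosure _) hs.
  by move=> z; rewrite /U /rball /= => hz; lra.
have Ux : U x by rewrite /U /rball /= (rho_xx hm); lra.
have cA : rclosed rho A by exact: rclosure_closed.
have AU : A `<=` U.
  by move=> z /(rclosure_ball hm) hz; rewrite /U /rball /=; lra.
have [B [nu [[cB BU _ nuB] [_ hnu]]]] := hG1 U x 1%R A UC Ux ltr01 cA AU.
have mB := mclosed hsig cB.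
have r4 : (0 < r / 4)%R by lra.
have r4R : (r / 4)%:E < R0 rho X0 x.
  by apply: le_lt_trans rR0; rewrite lee_fin; lra.
have ny4 : ~ rball rho x (r / 4) y0 by rewrite /rball /= -/u; lra.
have hy0 := hc2 x (r / 4)%R y0 X0x r4 r4R ny4.
have h1 := (hnu y0).1.
have Bb : forall z, B z -> (rho x z < r / 2)%R by move=> z /BU.
have h2 : Gpot G nu y0 <= (c * cD * gr g u)%R%:E * mass nu.
  apply: (int_carried_ub mB nuB (mGy mG y0) (fun z => Gge0 G0 _ _)).
    by apply: mulr_ge0; [nra| exact/ltW/(gr_gt0 gdec gpos u0)].
  move=> z Bz; have := Bb z Bz => hz.
  have hyz : (u / 2 <= rho y0 z)%R.
    have := rho_tri hm x z y0; rewrite -/u (rho_sym hm z y0); lra.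
  apply: le_trans (Gb y0 z).2 _.
  rewrite !EFinM -muleA; apply: lee_wpmul2l; first by rewrite lee_fin; lra.
  apply: le_trans (gle gdec (_ : (0 <= u / 2)%R) hyz) _; first lra.
  rewrite -(grE gdec gpos u0).
  exact: gdoub.
have h3 : (c^-1 * gr g u)%R%:E <= G y0 x.
  apply: le_trans _ (Gb y0 x).1.
  by rewrite (rho_sym hm) -/u EFinM -(grE gdec gpos u0).
set n := fine (mass nu).
have mn : mass nu = n%:E by exact: massE.
have n0 : (0 <= n)%R by rewrite /n fine_ge0 // mass_ge0.
have gu0 := gr_gt0 gdec gpos u0.
have a40 := gr_gt0 gdec gpos r4.
have a0 := gr_gt0 gdec gpos r0.
have r2 : (0 < r / 2)%R by lra.
have a20 := gr_gt0 gdec gpos r2.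
have key : (c2^-1 / gr g (r / 4) * (c^-1 * gr g u) <= c * cD * gr g u * n)%R.
  rewrite -lee_fin [in X in _ <= X]EFinM -mn EFinM.
  apply: le_trans (le_trans hy0 (le_trans h1 h2)).
  apply: lee_wpmul2l => //; rewrite lee_fin.
  by apply: divr_ge0; [rewrite invr_ge0; lra | exact: ltW].
have ha4 : (gr g (r / 4) <= cD * cD * gr g r)%R.
  have e4 : (r / 4 = r / 2 / 2)%R by field.
  have h4 : (gr g (r / 4) <= cD * gr g (r / 2))%R.
    rewrite -lee_fin EFinM -(grE gdec gpos r4) -(grE gdec gpos r2) e4.
    exact: gdoub.
  have h5 : (gr g (r / 2) <= cD * gr g r)%R.
    rewrite -lee_fin EFinM -(grE gdec gpos r2) -(grE gdec gpos r0).
    exact: gdoub.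
  by nra.
have ht : (1 <= c2 * gr g (r / 4) * c * (c * cD * n))%R.
  set a4 := gr g (r / 4) in key ha4 a40 *.
  set gu := gr g u in key gu0 *.
  have e : (c2^-1 / a4 * (c^-1 * gu) = gu / (c2 * a4 * c))%R.
    by field; apply/and3P; split; apply/negP => /eqP; lra.
  rewrite e in key.
  have : (gu <= c * cD * gu * n * (c2 * a4 * c))%R.
    by rewrite -ler_pdivrMr //; do ! apply: mulr_gt0.
  nra.
have hq : (1 <= (c2 * c * c * cD * cD * cD * gr g r) * n)%R by nra.
have k0 : (0 <= c1^-1)%R by rewrite invr_ge0; lra.
pose nu' : {finite_measure set X -> \bar R} := mscale (NngNum k0) nu.
have nu'E A' : nu' A' = (c1^-1)%:E * nu A' by [].
have hS : [set m : {finite_measure set X -> \bar R} |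
       m (~` rball rho x r) = 0 /\ forall z, Gpot G m z <= 1] nu'.
  split.
    rewrite nu'E.
    have -> : nu (~` rball rho x r) = 0.
      apply/le_anti/andP; split; last exact: measure_ge0.
      have : nu (~` rball rho x r) <= nu (~` B).
        apply: le_measure; rewrite ?inE.
        - by apply: measurableC; exact: (mopen hsig (@rball_open R X rho hm x r)).
        - exact: measurableC.
        - move=> z nz Bz; apply: nz; have := Bb z Bz.
          by rewrite /rball /=; lra.
      by rewrite nuB.
    by rewrite mule0.
  move=> z; rewrite /Gpot ge0_integral_mscale //; last 2 first.
  - exact: mGy.
  - by move=> w _; exact: Gge0.
  have hz := (hnu z).2.
  have hb : mass (epsA mu B z) <= 1 by exact: (mass_le1 hk z cB).
  apply: le_trans (lee_wpmul2l _ hz) _; first by rewrite lee_fin.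
  rewrite muleA -EFinM mulVf; last by apply/negP => /eqP; lra.
  by rewrite mul1e.
apply: le_trans (ereal_sup_ubound _); last first.
  by exists nu'; [exact: hS | reflexivity].
rewrite /mass nu'E -/(mass nu) mn -EFinM lee_fin.
have e : ((c1 * c2 * (c * c) * (cD * cD * cD))^-1 / fine (g r) =
  c1^-1 * (c2 * c * c * cD * cD * cD * gr g r)^-1)%R.
  rewrite /gr; field.
  by apply/and5P; split; apply/negP => /eqP; rewrite -?/(gr g r); lra.
rewrite e; apply: ler_wpM2l => //.
set q := (c2 * c * c * cD * cD * cD * gr g r)%R in hq *.
have q0 : (0 < q)%R by rewrite /q; do ! apply: mulr_gt0.
have hh : (q^-1 * 1 <= q^-1 * (q * n))%R.
  by apply: ler_wpM2l => //; rewrite invr_ge0 ltW.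
rewrite mulr1 mulrA mulVf in hh; last by apply/negP => /eqP; lra.
by rewrite mul1r in hh.
Qed.
End Part2.
Unset Implicit Arguments.

Theorem proposition4p6 (R : realType) (d : measure_display) (X : measurableType d)
  (rho : X -> X -> R) (X0 : set X)
  (mu : set X -> X -> {finite_measure set X -> \bar R})
  (G : X -> X -> \bar R) (g : R -> \bar R) (c cD M0 alpha0 : R) :
  is_metric rho -> rseparable rho ->
  (@measurable d X = <<s ropen rho >>) ->
  ropen rho X0 ->
  harmonic_kernel rho mu ->
  measurable_fun setT (fun p : X * X => G p.1 p.2) ->
  (forall x y, (0 < G x y)%E) ->
  G1 rho X0 mu G ->
  G2 rho G g c cD M0 alpha0 ->
  (G3 rho X0 G g -> G3bar rho X0 mu G g) /\
  (X0 <> setT -> G3bar rho X0 mu G g -> G3 rho X0 G g).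
Proof.
move=> hm _ hsig _ hk mG G0 hG1 hG2; split.
- exact: (part1 hm hsig hk mG G0 hG1 hG2).
- exact: (part2 hm hsig hk mG G0 hG1 hG2).
Qed.
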